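(* Assume the common support, overlap and unconfoundedness assumptions, and assume there is a known $\bar p$ such that $p_0\in[0,\bar p]$. Under Design 1, for all $x\in\mathcal X$, $\min\{\Gamma(x,0),\Gamma(x,\bar p)\}\le\theta(x)\le\max\{\Gamma(x,0),\Gamma(x,\bar p)\}$, and these bounds are sharp (they are the best possible bounds on $\theta(x)$ given the distribution of $(Y,T,X)$ and the stated assumptions).
   Context: Population variables: $Y^*\in\{0,1\}$ (outcome), $T^*\in\{0,1\}$ (treatment), $X^*$ (covariate vector). Potential outcomes $Y^*(1),Y^*(0)\in\{0,1\}$ satisfy $Y^*=T^*Y^*(1)+(1-T^* )Y^*(0)$. Let $p_0:=\Pr(Y^*=1)$. The observed vector $(Y,T,X)$ arises from Bernoulli sampling: $Y\in\{0,1\}$ is drawn with known probability $h_0:=\Pr(Y=1)\in(0,1)$, and given $Y=y$, $(T,X)$ is drawn from a distribution $\mathcal P_y$. Densities (or mass functions) are denoted by $f$. Design 1 (case-control): for all $t\in\{0,1\}$, $x\in\mathcal X$, $y\in\{0,1\}$, $f_{X|Y}(x\mid y)=f_{X^*|Y^*}(x\mid y)$ and $\Pr(T=t\mid X=x,Y=y)=\Pr(T^*=t\mid X^*=x,Y^*=y)$. Common support assumption: the support of $X^*$ and that of $X$ given $Y=y$ for $y=0,1$ coincide; call it $\mathcal X$. Let $\Pi(t\mid y,x):=\Pr(T=t\mid Y=y,X=x)$, assumed nonzero for all $t,y$. For $p\in[0,1]$, under Design 1, $r(x,p):=\frac{p(1-h_0)\Pr(Y=1\mid X=x)}{p(1-h_0)\Pr(Y=1\mid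 X=x)+h_0(1-p)\Pr(Y=0\mid X=x)}$. Define $\Gamma(x,p):=\frac{\Pi(1\mid 1,x)}{\Pi(0\mid 1,x)}\cdot\frac{\Pi(0\mid 0,x)+r(x,p)\{\Pi(0\mid 1,x)-\Pi(0\mid 0,x)\}}{\Pi(1\mid 0,x)+r(x,p)\{\Pi(1\mid 1,x)-\Pi(1\mid 0,x)\}}$. Causal relative risk: $\theta(x):=\Pr\{Y^*(1)=1\mid X^*=x\}/\Pr\{Y^*(0)=1\mid X^*=x\}$. Overlap: for all $(t,x)\in\{0,1\}\times\mathcal X$, $0<\Pr\{Y^*(t)=1\mid X^*=x\}<1$ and $0<\Pr(T^*=1\mid X^*=x)<1$. Unconfoundedness: for all $t,x$, $\Pr\{Y^*(t)=1\mid T^*=1,X^*=x\}=\Pr\{Y^*(t)=1\mid T^*=0,X^*=x\}$. *)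

(* Defs.v *)
From HB Require Import structures.
From mathcomp Require Import all_boot all_order all_algebra.
From mathcomp Require Import all_classical all_reals all_analysis.

Set Implicit Arguments.
Unset Strict Implicit.
Unset Printing Implicit Defensive.

Import Order.TTheory GRing.Theory Num.Theory.
Local Open Scope classical_set_scope.
Local Open Scope ring_scope.

(* Binary variables are encoded by bool: true = 1, false = 0. *)

(* Population: joint law of (Y'(1), Y'(0), T', X'), given by a density  *)
(* fX of X' w.r.t. a base measure mu on X, and for each x the           *)
(* conditional pmf  q x y1 y0 t = Pr(Y'(1)=y1, Y'(0)=y0, T'=t | X'=x).  *)
Record population (X : Type) (R : realType) := Population {
  fX : X -> R ;
  q  : X -> bool -> bool -> bool -> R }.

Section Pop.
Context {d : measure_display} {X : measurableType d} {R : realType}.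
Variable mu : {measure set X -> \bar R}.
Variable P : population X R.

Definition ystar (y1 y0 t : bool) : bool := if t then y1 else y0.

Definition pr_x (x : X) (E : bool -> bool -> bool -> bool) : R :=
  \sum_(y1 : bool) \sum_(y0 : bool) \sum_(t : bool)
     (if E y1 y0 t then q P x y1 y0 t else 0).

Definition prPO (t : bool) (x : X) : R :=
  pr_x x (fun y1 y0 _ => if t then y1 else y0).

Definition prT1 (x : X) : R := pr_x x (fun _ _ t => t).

Definition prY (y : bool) (x : X) : R :=
  pr_x x (fun y1 y0 t => ystar y1 y0 t == y).

Definition prTY (t y : bool) (x : X) : R :=
  pr_x x (fun y1 y0 t' => (t' == t) && (ystar y1 y0 t' == y)).

Definition prPO_T (t s : bool) (x : X) : R :=
  pr_x x (fun y1 y0 t' => (t' == s) && (if t then y1 else y0))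
  / pr_x x (fun _ _ t' => t' == s).

Definition p0 : R := fine (\int[mu]_x (fX P x * prY true x)%:E)%E.

Definition prYmarg (y : bool) : R := if y then p0 else 1 - p0.

Definition fX_Y (y : bool) (x : X) : R := fX P x * prY y x / prYmarg y.

Definition prT_XY (t y : bool) (x : X) : R := prTY t y x / prY y x.

Definition theta (x : X) : R := prPO true x / prPO false x.

Definition valid_pop : Prop :=
  measurable_fun setT (fX P) /\
  (forall x, 0 <= fX P x) /\
  (\int[mu]_x (fX P x)%:E)%E = 1%E /\
  (forall y1 y0 t, measurable_fun setT (fun x => q P x y1 y0 t)) /\
  (forall x y1 y0 t, 0 <= q P x y1 y0 t) /\
  (forall x, \sum_(y1 : bool) \sum_(y0 : bool) \sum_(t : bool)
                   q P x y1 y0 t = 1).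

End Pop.

Definition supp {X : Type} {R : realType} (f : X -> R) : set X :=
  [set x | 0 < f x].

Section Assumptions.
Context {d : measure_display} {X : measurableType d} {R : realType}.
Variable mu : {measure set X -> \bar R}.
(* observed data: fXY y = density of X given Y = y (w.r.t. mu),
   Pi t y x = Pi(t | y, x) = Pr(T = t | Y = y, X = x) *)
Variables (fXY : bool -> X -> R) (Pi : bool -> bool -> X -> R).
Variable P : population X R.

(* common support; the common support is  supp (fX P)  (called \mathcal X) *)
Definition common_support : Prop :=
  supp (fX P) = supp (fXY true) /\ supp (fX P) = supp (fXY false).

Definition overlap : Prop :=
  forall t x, supp (fX P) x ->
    (0 < prPO P t x < 1) /\ (0 < prT1 P x < 1).

Definition unconfoundedness : Prop :=
  forall t x, supp (fX P) x -> prPO_T P t true x = prPO_T P t false x.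

Definition design1 : Prop :=
  forall t x y, supp (fX P) x ->
    fXY y x = fX_Y mu P y x /\ Pi t y x = prT_XY P t y x.
End Assumptions.

Section Bounds.
Context {X : Type} {R : realType}.
Variables (h0 : R) (fXY : bool -> X -> R) (Pi : bool -> bool -> X -> R).

(* Pr(Y = y | X = x) under Bernoulli sampling *)
Definition prY1_obs (x : X) : R :=
  h0 * fXY true x / (h0 * fXY true x + (1 - h0) * fXY false x).
Definition prY0_obs (x : X) : R :=
  (1 - h0) * fXY false x / (h0 * fXY true x + (1 - h0) * fXY false x).

Definition r (x : X) (p : R) : R :=
  p * (1 - h0) * prY1_obs x /
  (p * (1 - h0) * prY1_obs x + h0 * (1 - p) * prY0_obs x).

Definition Gamma (x : X) (p : R) : R :=
  Pi true true x / Pi false true x *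
  ((Pi false false x + r x p * (Pi false true x - Pi false false x)) /
   (Pi true false x + r x p * (Pi true true x - Pi true false x))).
End Bounds.

Definition admissible {d : measure_display} {X : measurableType d}
  {R : realType} (mu : {measure set X -> \bar R})
  (fXY : bool -> X -> R) (Pi : bool -> bool -> X -> R) (pbar : R)
  (P : population X R) : Prop :=
  valid_pop mu P /\ common_support fXY P /\ overlap P /\
  unconfoundedness P /\ design1 mu fXY Pi P /\ 0 <= p0 mu P <= pbar.

(* Main.v *)
Require Import Defs.
From HB Require Import structures.
From mathcomp Require Import all_boot all_order all_algebra.
From mathcomp Require Import all_classical all_reals all_analysis.
From mathcomp Require Import ring lra.
Import Order.TTheory GRing.Theory Num.Theory.
Local Open Scope classical_set_scope.
Local Open Scope ring_scope.

Lemma inv_mble (R : realType) : measurable_fun [set: R] (GRing.inv : R -> R).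
Proof.
have -> : (GRing.inv : R -> R) = fun x => if x == 0 then (cst 0 : R -> R) x else x^-1.
  by apply: funext => x; case: eqP => // ->; rewrite invr0.
apply: measurable_fun_if => //.
  exact: measurable_realfun.measurable_fun_eqr.
apply: (@measurable_funS _ _ _ _ [set x : R | x != 0]).
- apply: measurable_realfun.open_measurable. exact: open_neq.
- by move=> x /= [_ ->].
- apply: measurable_realfun.open_continuous_measurable_fun; first exact: open_neq.
  by move=> x; rewrite inE => /inv_continuous.
Qed.

Lemma mbleV d (X : measurableType d) (R : realType) (f : X -> R) :
  measurable_fun setT f -> measurable_fun setT (fun x => (f x)^-1).
Proof. by move=> mf; exact: (measurableT_comp (inv_mble R) mf). Qed.

Lemma mbleM d (X : measurableType d) (R : realType) (f g : X -> R) :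
  measurable_fun setT f -> measurable_fun setT g -> measurable_fun setT (fun x => f x * g x).
Proof. exact: measurable_realfun.measurable_funM. Qed.
Lemma mbleD d (X : measurableType d) (R : realType) (f g : X -> R) :
  measurable_fun setT f -> measurable_fun setT g -> measurable_fun setT (fun x => f x + g x).
Proof. exact: measurable_realfun.measurable_funD. Qed.
Lemma mbleB d (X : measurableType d) (R : realType) (f g : X -> R) :
  measurable_fun setT f -> measurable_fun setT g -> measurable_fun setT (fun x => f x - g x).
Proof. exact: measurable_realfun.measurable_funB. Qed.
Lemma mbleC d (X : measurableType d) (R : realType) (c : R) :
  measurable_fun setT (fun _ : X => c).
Proof. exact: measurable_cst. Qed.

Lemma pr_x_mble d (X : measurableType d) (R : realType) (mu : {measure set X -> \bar R}) (P : population X R) E :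
  valid_pop mu P -> measurable_fun setT (fun x => pr_x P x E).
Proof.
move=> [_ [_ [_ [mq _]]]].
rewrite /pr_x.
have mt : forall y1 y0 t, measurable_fun setT (fun x => if E y1 y0 t then q P x y1 y0 t else 0).
  by move=> y1 y0 t; case: (E y1 y0 t); [exact: mq | exact: measurable_cst].
under eq_fun do rewrite !big_bool /=.
by repeat apply: mbleD.
Qed.

Lemma mbleN d (X : measurableType d) (R : realType) (f : X -> R) :
  measurable_fun setT f -> measurable_fun setT (fun x => - f x).
Proof. exact: measurable_realfun.measurable_funN. Qed.
From HB Require Import structures.
From mathcomp Require Import all_boot all_order all_algebra.
From mathcomp Require Import all_classical all_reals all_analysis.
From mathcomp Require Import ring lra.
Set Implicit Arguments.
Unset Strict Implicit.
Import Order.TTheory GRing.Theory Num.Theory.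
Local Open Scope classical_set_scope.
Local Open Scope ring_scope.

Definition qcore (R : realType) (a11 a10 a01 a00 pi : R) (y1 y0 t : bool) : R :=
  (if t then a11 * pi + a10 * (1 - pi) else a01 * pi + a00 * (1 - pi)) *
  (if y1 then a11 * pi / (a11 * pi + a10 * (1 - pi))
   else 1 - a11 * pi / (a11 * pi + a10 * (1 - pi))) *
  (if y0 then a01 * pi / (a01 * pi + a00 * (1 - pi))
   else 1 - a01 * pi / (a01 * pi + a00 * (1 - pi))).

Definition prc (R : realType) (c : bool -> bool -> bool -> R) (E : bool -> bool -> bool -> bool) : R :=
  \sum_(y1 : bool) \sum_(y0 : bool) \sum_(t : bool) (if E y1 y0 t then c y1 y0 t else 0).

Definition good (R : realType) (a11 a10 a01 a00 pi : R) :=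
  [/\ 0 < a11, 0 < a10, 0 < a01, 0 < a00 &
  [/\ a11 + a01 = 1, a10 + a00 = 1 & 0 < pi < 1]].

Lemma good_e (R : realType) (a11 a10 a01 a00 pi : R) : good a11 a10 a01 a00 pi ->
  0 < a11 * pi + a10 * (1 - pi) < 1 /\ 0 < a01 * pi + a00 * (1 - pi) < 1.
Proof.
case=> h1 h2 h3 h4 [h5 h6 /andP[h7 h8]].
split; apply/andP; split; nra.
Qed.

Lemma prc_PO (R : realType) (a11 a10 a01 a00 pi : R) t : good a11 a10 a01 a00 pi ->
  prc (qcore a11 a10 a01 a00 pi) (fun y1 y0 _ => if t then y1 else y0) =
  if t then a11 * pi / (a11 * pi + a10 * (1 - pi))
  else a01 * pi / (a01 * pi + a00 * (1 - pi)).
Proof.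
move=> g; have [/andP[e1 e1'] /andP[e0 e0']] := good_e g.
case: g => h1 h2 h3 h4 [h5 h6 /andP[h7 h8]].
rewrite /prc /qcore !big_bool /=; have E1 : a01 = 1 - a11 by lra.
have E2 : a00 = 1 - a10 by lra.
subst a01 a00.
case: t => /=; field; rewrite ?gt_eqF //= ?lt0r_neq0 //.
Qed.

Ltac galg g := let e1 := fresh "e1" in let e1' := fresh "e1'" in
  let e0 := fresh "e0" in let e0' := fresh "e0'" in
  have [/andP[e1 e1'] /andP[e0 e0']] := good_e g;
  case: g => ? ? ? ? [? ? /andP[? ?]].

Lemma prc_T (R : realType) (a11 a10 a01 a00 pi : R) s : good a11 a10 a01 a00 pi ->
  prc (qcore a11 a10 a01 a00 pi) (fun _ _ t' => t' == s) =
  if s then a11 * pi + a10 * (1 - pi) else a01 * pi + a00 * (1 - pi).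
Proof.
move=> g; galg g.
have E1 : a01 = 1 - a11 by lra.
have E2 : a00 = 1 - a10 by lra.
subst a01 a00.
by rewrite /prc /qcore !big_bool /=; case: s => /=; field; rewrite ?gt_eqF //= ?lt0r_neq0 //.
Qed.

Lemma prc_T1 (R : realType) (a11 a10 a01 a00 pi : R) : good a11 a10 a01 a00 pi ->
  prc (qcore a11 a10 a01 a00 pi) (fun _ _ t' => t') = a11 * pi + a10 * (1 - pi).
Proof.
move=> g; galg g.
have E1 : a01 = 1 - a11 by lra.
have E2 : a00 = 1 - a10 by lra.
subst a01 a00.
by rewrite /prc /qcore !big_bool /=; field; rewrite ?gt_eqF //= ?lt0r_neq0 //.
Qed.

Lemma prc_all (R : realType) (a11 a10 a01 a00 pi : R) : good a11 a10 a01 a00 pi ->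
  \sum_(y1 : bool) \sum_(y0 : bool) \sum_(t : bool) qcore a11 a10 a01 a00 pi y1 y0 t = 1.
Proof.
move=> g; galg g.
have E1 : a01 = 1 - a11 by lra.
have E2 : a00 = 1 - a10 by lra.
subst a01 a00.
by rewrite /qcore !big_bool /=; field; rewrite ?gt_eqF //= ?lt0r_neq0 //.
Qed.

Lemma prc_Y (R : realType) (a11 a10 a01 a00 pi : R) y : good a11 a10 a01 a00 pi ->
  prc (qcore a11 a10 a01 a00 pi) (fun y1 y0 t => ystar y1 y0 t == y) =
  if y then pi else 1 - pi.
Proof.
move=> g; galg g.
have E1 : a01 = 1 - a11 by lra.
have E2 : a00 = 1 - a10 by lra.
subst a01 a00.
by rewrite /prc /qcore !big_bool /=; case: y => /=; field; rewrite ?gt_eqF //= ?lt0r_neq0 //.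
Qed.

Lemma prc_TY (R : realType) (a11 a10 a01 a00 pi : R) t y : good a11 a10 a01 a00 pi ->
  prc (qcore a11 a10 a01 a00 pi) (fun y1 y0 t' => (t' == t) && (ystar y1 y0 t' == y)) =
  if t then (if y then a11 * pi else a10 * (1 - pi))
  else (if y then a01 * pi else a00 * (1 - pi)).
Proof.
move=> g; galg g.
have E1 : a01 = 1 - a11 by lra.
have E2 : a00 = 1 - a10 by lra.
subst a01 a00.
by rewrite /prc /qcore !big_bool /=; case: t; case: y => /=; field; rewrite ?gt_eqF //= ?lt0r_neq0 //.
Qed.

Lemma prc_POTn (R : realType) (a11 a10 a01 a00 pi : R) t s : good a11 a10 a01 a00 pi ->
  prc (qcore a11 a10 a01 a00 pi) (fun y1 y0 t' => (t' == s) && (if t then y1 else y0)) =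
  (if s then a11 * pi + a10 * (1 - pi) else a01 * pi + a00 * (1 - pi)) *
  (if t then a11 * pi / (a11 * pi + a10 * (1 - pi))
   else a01 * pi / (a01 * pi + a00 * (1 - pi))).
Proof.
move=> g; galg g.
have E1 : a01 = 1 - a11 by lra.
have E2 : a00 = 1 - a10 by lra.
subst a01 a00.
by rewrite /prc /qcore !big_bool /=; case: t; case: s => /=; field; rewrite ?gt_eqF //= ?lt0r_neq0 //.
Qed.

Lemma qcore_ge0 (R : realType) (a11 a10 a01 a00 pi : R) y1 y0 t : good a11 a10 a01 a00 pi ->
  0 <= qcore a11 a10 a01 a00 pi y1 y0 t.
Proof.
move=> g; galg g.
have m1 : 0 <= a11 * pi / (a11 * pi + a10 * (1 - pi)) <= 1.
  apply/andP; split; first by apply: divr_ge0; nra.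
  by rewrite ler_pdivrMr //; nra.
have m0 : 0 <= a01 * pi / (a01 * pi + a00 * (1 - pi)) <= 1.
  apply/andP; split; first by apply: divr_ge0; nra.
  by rewrite ler_pdivrMr //; nra.
rewrite /qcore; apply: mulr_ge0; first apply: mulr_ge0.
- by case: t; lra.
- by case: y1; lra.
- by case: y0; lra.
Qed.

Definition Nf (R : realType) (a11 a10 a01 a00 al be p : R) :=
  a11 * (a00 * (1 - p) * be + a01 * p * al).
Definition Df (R : realType) (a11 a10 a01 a00 al be p : R) :=
  a01 * (a10 * (1 - p) * be + a11 * p * al).

Lemma r_eq (X : Type) (R : realType) (h0 : R) fXY (x : X) p :
  0 < h0 < 1 -> 0 < fXY true x -> 0 < fXY false x -> 0 <= p <= 1 ->
  r h0 fXY x p = p * fXY true x / (p * fXY true x + (1 - p) * fXY false x).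
Proof.
move=> /andP[h1 h2] al be /andP[p1 p2].
have S0 : 0 < h0 * fXY true x + (1 - h0) * fXY false x by nra.
have Q0 : 0 < p * fXY true x + (1 - p) * fXY false x by nra.
rewrite /r /prY1_obs /prY0_obs.
have -> : p * (1 - h0) * (h0 * fXY true x / (h0 * fXY true x + (1 - h0) * fXY false x)) +
   h0 * (1 - p) * ((1 - h0) * fXY false x / (h0 * fXY true x + (1 - h0) * fXY false x))
   = h0 * (1 - h0) * (p * fXY true x + (1 - p) * fXY false x) /
     (h0 * fXY true x + (1 - h0) * fXY false x).
  by field; rewrite gt_eqF.
field; rewrite !gt_eqF // subr_gt0 //.
Qed.

Lemma conv_pos (R : realType) (A B p : R) : 0 < A -> 0 < B -> 0 <= p <= 1 ->
  0 < A * (1 - p) + B * p.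
Proof.
move=> hA hB /andP[p1 p2]; case: (ltP p 1) => hp.
  have : 0 < A * (1 - p) by apply: mulr_gt0; lra.
  have : 0 <= B * p by apply: mulr_ge0; lra.
  lra.
have -> : p = 1 by lra.
lra.
Qed.

Lemma GammaND (X : Type) (R : realType) (h0 : R) fXY Pi (x : X) p :
  0 < h0 < 1 -> 0 < fXY true x -> 0 < fXY false x -> 0 <= p <= 1 ->
  (forall t y, 0 < Pi t y x) ->
  Gamma h0 fXY Pi x p =
  Nf (Pi true true x) (Pi true false x) (Pi false true x) (Pi false false x)
     (fXY true x) (fXY false x) p /
  Df (Pi true true x) (Pi true false x) (Pi false true x) (Pi false false x)
     (fXY true x) (fXY false x) p.
Proof.
move=> h al be pp hP.
rewrite /Gamma (r_eq h al be pp) /Nf /Df.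
move: (hP true true) (hP true false) (hP false true) (hP false false) => ? ? ? ?.
move: pp => /andP[p1 p2].
have Q0 : 0 < p * fXY true x + (1 - p) * fXY false x by nra.
have D0 : 0 < Pi true false x * (1 - p) * fXY false x + Pi true true x * p * fXY true x.
  have := @conv_pos R (Pi true false x * fXY false x) (Pi true true x * fXY true x) p.
  have -> : Pi true false x * fXY false x * (1 - p) + Pi true true x * fXY true x * p =
    Pi true false x * (1 - p) * fXY false x + Pi true true x * p * fXY true x by ring.
  apply; rewrite ?mulr_gt0 //; lra.
by field; rewrite !gt_eqF.
Qed.
From HB Require Import structures.
From mathcomp Require Import all_boot all_order all_algebra.
From mathcomp Require Import all_classical all_reals all_analysis.
From mathcomp Require Import ring lra.
Set Implicit Arguments.
Unset Strict Implicit.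
Import Order.TTheory GRing.Theory Num.Theory.
Local Open Scope ring_scope.

Lemma between (R : realType) (a b v : R) : (v - a) * (v - b) <= 0 ->
  Num.min a b <= v <= Num.max a b.
Proof.
move=> h; case: (leP a b) => hab; apply/andP; split; nra.
Qed.

Lemma mob (R : realType) (N D : R -> R) (n0 n1 d0 d1 p pb : R) :
  (forall s, N s = n0 + n1 * s) -> (forall s, D s = d0 + d1 * s) ->
  0 <= p <= pb -> 0 < D 0 -> 0 < D p -> 0 < D pb ->
  Num.min (N 0 / D 0) (N pb / D pb) <= N p / D p <= Num.max (N 0 / D 0) (N pb / D pb).
Proof.
move=> hN hD /andP[p0 ppb] D0 Dp Dpb; apply: between.
have -> : (N p / D p - N 0 / D 0) * (N p / D p - N pb / D pb) =
   (p * (p - pb)) * ((n1 * d0 - n0 * d1) ^+ 2 / (D p * D 0 * D p * D pb)).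
  move: D0 Dp Dpb; rewrite !hN !hD mulr0 addr0 => D0 Dp Dpb.
  by field; rewrite !gt_eqF.
have h1 : p * (p - pb) <= 0 by nra.
have h2 : 0 <= (n1 * d0 - n0 * d1) ^+ 2 / (D p * D 0 * D p * D pb).
  by apply: divr_ge0; [exact: sqr_ge0 | rewrite !mulr_ge0 // ltW].
nra.
Qed.

Lemma lin_start (R : realType) (a b c0 c1 : R) : a < b ->
  (forall s, a < s < b -> 0 <= c0 + c1 * s) -> 0 <= c0 + c1 * a.
Proof.
move=> ab h; case: (leP c1 0) => hc1.
  have := h ((a + b) / 2); rewrite (_ : a < (a+b)/2 < b); last by apply/andP; split; lra.
  move=> /(_ isT); nra.
rewrite leNgt; apply/negP => hneg.
set u := - (c0 + c1 * a).
set w := b - a.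
have u0 : 0 < u by rewrite /u; lra.
have w0 : 0 < w by rewrite /w; lra.
set t := w * u / (u + w * c1).
have den : 0 < u + w * c1 by nra.
have t0 : 0 < t by rewrite /t; apply: divr_gt0 => //; exact: mulr_gt0.
have hw : 0 < w * (w * c1) by rewrite !mulr_gt0.
have hu : 0 < c1 * (w * u) by rewrite !mulr_gt0.
have tw : t < w.
  rewrite /t ltr_pdivrMr //. rewrite mulrDr. lra.
have ct : c1 * t < u.
  rewrite /t mulrA ltr_pdivrMr // mulrDr. 
  have -> : c1 * (w * u) = u * (w * c1) by ring.
  have : 0 < u * u by rewrite mulr_gt0. lra.
have := h (a + t); rewrite (_ : a < a + t < b); last by apply/andP; split; rewrite /w in tw; lra.
move=> /(_ isT); rewrite /u in ct; nra.
Qed.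

Lemma lin_end (R : realType) (a b c0 c1 : R) : a < b ->
  (forall s, a < s < b -> 0 <= c0 + c1 * s) -> 0 <= c0 + c1 * a /\ 0 <= c0 + c1 * b.
Proof.
move=> ab h; split; first exact: lin_start h.
have := @lin_start R (- b) (- a) (c0) (- c1).
rewrite (_ : c0 + - c1 * - b = c0 + c1 * b); last by ring.
apply; first lra.
move=> s hs; rewrite (_ : c0 + - c1 * s = c0 + c1 * (- s)); last by ring.
apply: h; lra.
Qed.
From HB Require Import structures.
From mathcomp Require Import all_boot all_order all_algebra.
From mathcomp Require Import all_classical all_reals all_analysis.
From mathcomp Require Import ring lra.
Set Implicit Arguments.
Unset Strict Implicit.
Import Order.TTheory GRing.Theory Num.Theory.
Local Open Scope classical_set_scope.
Local Open Scope ring_scope.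

Definition pic (X : Type) (R : realType) (p : R) (fXY : bool -> X -> R) (x : X) : R :=
  p * fXY true x / (p * fXY true x + (1 - p) * fXY false x).

Definition popc (X : Type) (R : realType) (S : X -> bool) (p : R)
  (fXY : bool -> X -> R) (Pi : bool -> bool -> X -> R) : population X R :=
  @Population X R (fun x => p * fXY true x + (1 - p) * fXY false x)
   (fun x y1 y0 t => if S x then
      qcore (Pi true true x) (Pi true false x) (Pi false true x) (Pi false false x)
        (pic p fXY x) y1 y0 t else 8^-1).

Lemma popc_pr d (X : measurableType d) (R : realType) (S : X -> bool) (p : R) fXY Pi x E :
  S x -> pr_x (popc S p fXY Pi) x E =
  prc (qcore (Pi true true x) (Pi true false x) (Pi false true x) (Pi false false x)
        (pic p fXY x)) E.
Proof. by move=> Sx; rewrite /pr_x /prc /= Sx. Qed.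

Lemma p0_popc d (X : measurableType d) (R : realType) (mu : {measure set X -> \bar R})
  (S : X -> bool) (p : R) (fXY : bool -> X -> R) (Pi : bool -> bool -> X -> R) :
  0 < p < 1 ->
  (forall y x, 0 <= fXY y x) ->
  (forall y, measurable_fun setT (fXY y)) ->
  (forall y, (\int[mu]_x (fXY y x)%:E)%E = 1%E) ->
  (forall x, S x -> 0 < fXY true x /\ 0 < fXY false x /\
     good (Pi true true x) (Pi true false x) (Pi false true x) (Pi false false x) (pic p fXY x)) ->
  (forall x, ~~ S x -> fXY true x = 0 /\ fXY false x = 0) ->
  p0 mu (popc S p fXY Pi) = p.
Proof.
move=> /andP[hp0 hp1] f0 mf If hS hnS.
rewrite /Defs.p0.
have -> : (\int[mu]_x ((fX (popc S p fXY Pi) x * prY (popc S p fXY Pi) true x)%:E))%E =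
          (\int[mu]_x (p%:E * (fXY true x)%:E))%E.
  apply: eq_integral => x _; rewrite -EFinM; congr EFin.
  case Sx: (S x).
    have [al [be g]] := hS x Sx.
    rewrite /prY popc_pr // prc_Y // /pic /=.
    by field; rewrite gt_eqF //; nra.
  have [h1 h2] := hnS x (negbT Sx).
  by rewrite /= h1 h2 !mulr0 addr0 mul0r.
rewrite ge0_integralZl_EFin //; last by lra.
- by rewrite If mule1.
- by move=> x _; rewrite lee_fin.
- by apply/measurable_realfun.measurable_EFinP.
Qed.

Lemma int_fXc d (X : measurableType d) (R : realType) (mu : {measure set X -> \bar R})
  (p : R) (fXY : bool -> X -> R) :
  0 < p < 1 ->
  (forall y x, 0 <= fXY y x) ->
  (forall y, measurable_fun setT (fXY y)) ->
  (forall y, (\int[mu]_x (fXY y x)%:E)%E = 1%E) ->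
  (\int[mu]_x ((p * fXY true x + (1 - p) * fXY false x)%:E) = 1)%E.
Proof.
move=> /andP[hp0 hp1] f0 mf If.
have -> : (\int[mu]_x ((p * fXY true x + (1 - p) * fXY false x)%:E))%E =
    (\int[mu]_x (p%:E * (fXY true x)%:E + (1 - p)%:E * (fXY false x)%:E))%E.
  by apply: eq_integral => x _; rewrite -!EFinM -EFinD.
have I1 k : 0 <= k -> (\int[mu]_x (k%:E * (fXY true x)%:E) = k%:E)%E.
  move=> k0; rewrite ge0_integralZl_EFin //; first by rewrite If mule1.
  by move=> x _; rewrite lee_fin.
  by apply/measurable_realfun.measurable_EFinP.
have I2 k : 0 <= k -> (\int[mu]_x (k%:E * (fXY false x)%:E) = k%:E)%E.
  move=> k0; rewrite ge0_integralZl_EFin //; first by rewrite If mule1.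
  by move=> x _; rewrite lee_fin.
  by apply/measurable_realfun.measurable_EFinP.
rewrite ge0_integralD //.
- by rewrite I1 ?I2 -?EFinD; [congr EFin; ring | lra | lra].
- by move=> x _; rewrite -EFinM lee_fin mulr_ge0 //; lra.
- by apply: measurable_funeM; apply/measurable_realfun.measurable_EFinP.
- by move=> x _; rewrite -EFinM lee_fin mulr_ge0 //; lra.
- by apply: measurable_funeM; apply/measurable_realfun.measurable_EFinP.
Qed.

Lemma pic_good (X : Type) (R : realType) (p : R) (fXY : bool -> X -> R) (Pi : bool -> bool -> X -> R) x :
  0 < p < 1 -> 0 < fXY true x -> 0 < fXY false x -> (forall t y, 0 < Pi t y x) ->
  (forall y, Pi true y x + Pi false y x = 1) ->
  good (Pi true true x) (Pi true false x) (Pi false true x) (Pi false false x) (pic p fXY x).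
Proof.
move=> /andP[hp0 hp1] al be hP hs.
have Q0 : 0 < p * fXY true x + (1 - p) * fXY false x.
  by apply: addr_gt0; apply: mulr_gt0 => //; lra.
split; try exact: hP.
split; [exact: hs | exact: hs | ].
apply/andP; split; rewrite /pic.
  by apply: divr_gt0 => //; exact: mulr_gt0.
rewrite ltr_pdivrMr // mul1r ltrDl; apply: mulr_gt0 => //; lra.
Qed.

Lemma adm_popc d (X : measurableType d) (R : realType) (mu : {measure set X -> \bar R})
  (fXY : bool -> X -> R) (Pi : bool -> bool -> X -> R) (pbar : R) (S : X -> bool) (p : R) :
  0 < p < 1 -> p <= pbar ->
  (forall y x, 0 <= fXY y x) ->
  (forall y, measurable_fun setT (fXY y)) ->
  (forall y, (\int[mu]_x (fXY y x)%:E)%E = 1%E) ->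
  (forall y x, Pi true y x + Pi false y x = 1) ->
  measurable_fun setT S ->
  (forall t y, exists g : X -> R, measurable_fun setT g /\ forall x, S x -> Pi t y x = g x) ->
  (forall x, S x -> 0 < fXY true x /\ 0 < fXY false x /\ (forall t y, 0 < Pi t y x)) ->
  (forall x, ~~ S x -> fXY true x = 0 /\ fXY false x = 0) ->
  admissible mu fXY Pi pbar (popc S p fXY Pi) /\
  forall x, S x -> theta (popc S p fXY Pi) x =
    Nf (Pi true true x) (Pi true false x) (Pi false true x) (Pi false false x)
       (fXY true x) (fXY false x) p /
    Df (Pi true true x) (Pi true false x) (Pi false true x) (Pi false false x)
       (fXY true x) (fXY false x) p.
Proof.
move=> hp ppb f0 mf If hs mS mPi hS hnS.
have [hp0 hp1] : 0 < p /\ p < 1 by move: hp => /andP[].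
have G x : S x -> good (Pi true true x) (Pi true false x) (Pi false true x) (Pi false false x) (pic p fXY x).
  by move=> Sx; have [al [be hP]] := hS x Sx; exact: pic_good.
have Hp0 : p0 mu (popc S p fXY Pi) = p.
  apply: p0_popc => // x Sx; have [al [be hP]] := hS x Sx; do 2 split => //; exact: G.
have Sfx x : (0 < fX (popc S p fXY Pi) x) = S x.
  rewrite /=; case Sx: (S x).
    have [al [be _]] := hS x Sx; apply: addr_gt0; apply: mulr_gt0 => //; lra.
  by have [-> ->] := hnS x (negbT Sx); rewrite !mulr0 addr0 ltxx.
have Sf1 x : (0 < fXY true x) = S x.
  case Sx: (S x); first by have [al _] := hS x Sx.
  by have [-> _] := hnS x (negbT Sx); rewrite ltxx.
have Sf0 x : (0 < fXY false x) = S x.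
  case Sx: (S x); first by have [_ [be _]] := hS x Sx.
  by have [_ ->] := hnS x (negbT Sx); rewrite ltxx.
have suppS x : supp (fX (popc S p fXY Pi)) x -> S x by rewrite /supp /= -Sfx.
split; last first.
  move=> x Sx; have g := G x Sx; have [/andP[e1 e1'] /andP[e0 e0']] := good_e g.
  have [al [be hP]] := hS x Sx.
  move: (hP true true) (hP true false) (hP false true) (hP false false) => ? ? ? ?.
  have Q0 : 0 < p * fXY true x + (1 - p) * fXY false x.
    by apply: addr_gt0; apply: mulr_gt0 => //; lra.
  have pi0 : 0 < pic p fXY x by case: g => _ _ _ _ [_ _ /andP[]].
  rewrite /theta /prPO !popc_pr // (prc_PO true g) (prc_PO false g) /Nf /Df.
  have -> : Pi true true x * (Pi false false x * (1 - p) * fXY false x + Pi false true x * p * fXY true x) =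
      Pi true true x * (Pi false false x * ((1 - p) * fXY false x) + Pi false true x * (p * fXY true x)) by ring.
  have -> : Pi false true x * (Pi true false x * (1 - p) * fXY false x + Pi true true x * p * fXY true x) =
      Pi false true x * (Pi true false x * ((1 - p) * fXY false x) + Pi true true x * (p * fXY true x)) by ring.
  have hA : p * fXY true x = pic p fXY x * (p * fXY true x + (1 - p) * fXY false x).
    by rewrite /pic; field; rewrite gt_eqF.
  have hB : (1 - p) * fXY false x = (1 - pic p fXY x) * (p * fXY true x + (1 - p) * fXY false x).
    by rewrite /pic; field; rewrite gt_eqF.
  move: hA hB Q0; move: (p * fXY true x + (1 - p) * fXY false x) => Q hA hB Q0.
  rewrite hA hB.
  have -> : Pi true false x * ((1 - pic p fXY x) * Q) + Pi true true x * (pic p fXY x * Q) =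
    Q * (Pi true true x * pic p fXY x + Pi true false x * (1 - pic p fXY x)) by ring.
  have -> : Pi false false x * ((1 - pic p fXY x) * Q) + Pi false true x * (pic p fXY x * Q) =
    Q * (Pi false true x * pic p fXY x + Pi false false x * (1 - pic p fXY x)) by ring.
  by field; rewrite !gt_eqF.
split.
  split; first by apply: mbleD; apply: mbleM => //; exact: mbleC.
  split; first by move=> x /=; apply: addr_ge0; apply: mulr_ge0 => //; lra.
  split; first exact: int_fXc.
  split.
    move=> y1 y0 t /=.
    have [g11 [mg11 e11]] := mPi true true.
    have [g10 [mg10 e10]] := mPi true false.
    have [g01 [mg01 e01]] := mPi false true.
    have [g00 [mg00 e00]] := mPi false false.
    apply: (@eq_measurable_fun _ _ _ _ _ (fun x => if S x then
      qcore (g11 x) (g10 x) (g01 x) (g00 x) (pic p fXY x) y1 y0 t else 8^-1)).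
      move=> x _; case Sx: (S x) => //.
      by rewrite -e11 // -e10 // -e01 // -e00.
    apply: measurable_fun_ifT => //.
    rewrite /qcore /pic.
    case: y1; case: y0; case: t => /=;
      repeat first [ apply: mbleM | apply: mbleB | apply: mbleD | apply: mbleN | apply: mbleV | apply: mbleC | apply: mf | assumption ].
  split.
    move=> x y1 y0 t /=; case Sx: (S x); first exact: qcore_ge0 (G x Sx).
    by rewrite invr_ge0.
  move=> x /=; case Sx: (S x); first exact: prc_all (G x Sx).
  rewrite !big_bool /=.
  have h8 : (8 : R)^-1 * 8 = 1 by rewrite mulVf.
  lra.
split.
  by split; rewrite /supp; apply/seteqP; split => x /=; rewrite ?Sfx ?Sf1 ?Sf0.
split.
  move=> t x /suppS Sx; have g := G x Sx.
  have [/andP[e1 e1'] /andP[e0 e0']] := good_e g.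
  have [al [be hP]] := hS x Sx.
  move: (hP true true) (hP true false) (hP false true) (hP false false) => ? ? ? ?.
  have [pi0 pi1] : 0 < pic p fXY x /\ pic p fXY x < 1 by case: g => _ _ _ _ [_ _ /andP[]].
  rewrite /prT1 /prPO !popc_pr // prc_T1 // prc_PO //; split; last by apply/andP.
  have hm a b : 0 < a -> 0 < b -> 0 < a * pic p fXY x / (a * pic p fXY x + b * (1 - pic p fXY x)) < 1.
    move=> a0 b0; have d0 : 0 < a * pic p fXY x + b * (1 - pic p fXY x).
      by apply: addr_gt0; apply: mulr_gt0 => //; lra.
    apply/andP; split; first by apply: divr_gt0 => //; exact: mulr_gt0.
    rewrite ltr_pdivrMr // mul1r ltrDl; apply: mulr_gt0 => //; lra.
  by case: t; apply: hm.
split.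
  move=> t x /suppS Sx; have g := G x Sx.
  have [/andP[e1 e1'] /andP[e0 e0']] := good_e g.
  rewrite /prPO_T !popc_pr // !prc_POTn // !prc_T //=.
  by field; rewrite !gt_eqF.
split.
  move=> t x y /suppS Sx; have g := G x Sx.
  have [al [be hP]] := hS x Sx.
  have [pi0 pi1] : 0 < pic p fXY x /\ pic p fXY x < 1 by case: g => _ _ _ _ [_ _ /andP[]].
  have Q0 : 0 < p * fXY true x + (1 - p) * fXY false x.
    by apply: addr_gt0; apply: mulr_gt0 => //; lra.
  split.
    rewrite /fX_Y /prYmarg Hp0 /prY popc_pr // prc_Y //=.
    by case: y; rewrite /pic /=; field; rewrite !gt_eqF // subr_gt0.
  rewrite /prT_XY /prTY /prY !popc_pr // prc_TY // prc_Y //.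
  by case: t; case: y => /=; field; rewrite !gt_eqF // subr_gt0.
by rewrite Hp0; apply/andP; split => //; lra.
Qed.
From HB Require Import structures.
From mathcomp Require Import all_boot all_order all_algebra.
From mathcomp Require Import all_classical all_reals all_analysis.
From mathcomp Require Import ring lra.
Set Implicit Arguments.
Unset Strict Implicit.
Import Order.TTheory GRing.Theory Num.Theory.
Local Open Scope classical_set_scope.
Local Open Scope ring_scope.

Lemma theta_P d (X : measurableType d) (R : realType) (mu : {measure set X -> \bar R})
  (fXY : bool -> X -> R) (Pi : bool -> bool -> X -> R) (P : population X R) x :
  (forall x, \sum_(y1 : bool) \sum_(y0 : bool) \sum_(t : bool) q P x y1 y0 t = 1) ->
  0 < prT1 P x < 1 ->
  (forall t, prPO_T P t true x = prPO_T P t false x) ->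
  (forall t y, fXY y x = fX_Y mu P y x /\ Pi t y x = prT_XY P t y x) ->
  0 < fX P x -> 0 < fXY true x -> 0 < fXY false x ->
  (forall t y, Pi t y x != 0) ->
  [/\ p0 mu P != 0, 1 - p0 mu P != 0 &
  theta P x =
    Nf (Pi true true x) (Pi true false x) (Pi false true x) (Pi false false x)
       (fXY true x) (fXY false x) (p0 mu P) /
    Df (Pi true true x) (Pi true false x) (Pi false true x) (Pi false false x)
       (fXY true x) (fXY false x) (p0 mu P)].
Proof.
move=> hsum /andP[e1p e1l] uc d1 fX0 al be Pnz.
have hs := hsum x.
have [hal _] := d1 true true.
have [hbe _] := d1 true false.
have hPi t y : Pi t y x = prTY P t y x / prY P y x by have [_ ->] := d1 t y.
rewrite /fX_Y /prYmarg in hal hbe.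
set pP := p0 mu P in hal hbe *.
have pP0 : pP != 0.
  apply/negP => /eqP h; move: hal; rewrite h invr0 mulr0 => h'; lra.
have pP1 : 1 - pP != 0.
  apply/negP => /eqP h; move: hbe; rewrite /= h invr0 mulr0 => h'; lra.
have Y1 : prY P true x != 0.
  apply/negP => /eqP h; move: hal; rewrite h mulr0 mul0r => h'; lra.
have Y0 : prY P false x != 0.
  apply/negP => /eqP h; move: hbe; rewrite /= h mulr0 mul0r => h'; lra.
have e1n : prT1 P x != 0 by rewrite gt_eqF.
have e0n : 1 - prT1 P x != 0 by rewrite gt_eqF // subr_gt0.
have L3 : pr_x P x (fun _ _ t' => t' == true) = prT1 P x.
  by rewrite /prT1 /pr_x !big_bool /=; lra.
have L4 : pr_x P x (fun _ _ t' => t' == false) = 1 - prT1 P x.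
  by move: hs; rewrite /prT1 /pr_x !big_bool /=; lra.
have U1 := uc true; have U0 := uc false.
rewrite /prPO_T L3 L4 in U1 U0.
have L1 : prPO P true x = pr_x P x (fun y1 y0 t' => (t' == true) && (if true then y1 else y0))
   + pr_x P x (fun y1 y0 t' => (t' == false) && (if true then y1 else y0)).
  by rewrite /prPO /pr_x !big_bool /=; lra.
have L2 : prPO P false x = pr_x P x (fun y1 y0 t' => (t' == true) && (if false then y1 else y0))
   + pr_x P x (fun y1 y0 t' => (t' == false) && (if false then y1 else y0)).
  by rewrite /prPO /pr_x !big_bool /=; lra.
have L5 : pr_x P x (fun y1 y0 t' => (t' == true) && (if true then y1 else y0)) = prTY P true true x.
  by rewrite /prTY /pr_x !big_bool /=; lra.
have L6 : pr_x P x (fun y1 y0 t' => (t' == false) && (if false then y1 else y0)) = prTY P false true x.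
  by rewrite /prTY /pr_x !big_bool /=; lra.
have L7 : prTY P true false x = prT1 P x - prTY P true true x.
  by rewrite /prTY /prT1 /pr_x !big_bool /=; lra.
have L8 : prTY P false false x = 1 - prT1 P x - prTY P false true x.
  by move: hs; rewrite /prTY /prT1 /pr_x !big_bool /=; lra.
rewrite L5 in L1 U1; rewrite L6 in L2 U0.
move: L1 L2 U1 U0.
move: (pr_x P x (fun y1 y0 t' => (t' == false) && (if true then y1 else y0))) => k10.
move: (pr_x P x (fun y1 y0 t' => (t' == true) && (if false then y1 else y0))) => k01.
move=> L1 L2 U1 U0.
have K10 : k10 = prTY P true true x / prT1 P x * (1 - prT1 P x) by rewrite U1 divfK.
have K01 : k01 = prTY P false true x / (1 - prT1 P x) * prT1 P x by rewrite -U0 divfK.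
have T01 : prTY P false true x != 0.
  by apply/negP => /eqP h; move: (Pnz false true); rewrite hPi h mul0r eqxx.
split => //.
rewrite /theta L1 L2 K10 K01 /Nf /Df hal hbe !hPi L7 L8 /=.
field. have -> : (prT1 P x - prTY P true true x) * fX P x + prTY P true true x * fX P x = prT1 P x * fX P x by ring.
by rewrite T01 Y1 Y0 pP0 pP1 e1n e0n mulf_neq0 // gt_eqF.
Qed.

Lemma sharp_lin (R : realType) (N D : R -> R) (n0 n1 d0 d1 pb L : R) :
  (forall s, N s = n0 + n1 * s) -> (forall s, D s = d0 + d1 * s) -> 0 < pb ->
  (forall s, 0 <= s <= pb -> 0 < D s) ->
  (forall s, 0 < s < pb -> L <= N s / D s) -> L <= N 0 / D 0 /\ L <= N pb / D pb.
Proof.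
move=> hN hD pb0 Dp h.
have h' s : 0 < s < pb -> 0 <= (n0 - L * d0) + (n1 - L * d1) * s.
  move=> hs; have := h s hs; rewrite ler_pdivlMr; last by apply: Dp; case/andP: hs => a b; apply/andP; split; lra.
  rewrite hN hD => hh; nra.
have [a b] := lin_end pb0 h'.
rewrite !ler_pdivlMr; last 2 first.
- by apply: Dp; apply/andP; split; lra.
- by apply: Dp; apply/andP; split; lra.
rewrite !hN !hD; split; nra.
Qed.

Lemma sharp_lin2 (R : realType) (N D : R -> R) (n0 n1 d0 d1 pb L U : R) :
  (forall s, N s = n0 + n1 * s) -> (forall s, D s = d0 + d1 * s) -> 0 < pb ->
  (forall s, 0 <= s <= pb -> 0 < D s) ->
  (forall s, 0 < s < pb -> L <= N s / D s <= U) ->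
  Num.min (N 0 / D 0) (N pb / D pb) >= L /\ Num.max (N 0 / D 0) (N pb / D pb) <= U.
Proof.
move=> hN hD pb0 Dp h.
have [a b] := sharp_lin hN hD pb0 Dp (fun s hs => proj1 (andP (h s hs))).
have hN' s : (fun s => - N s) s = - n0 + - n1 * s by rewrite /= hN; ring.
have h2 s : 0 < s < pb -> - U <= (fun s => - N s) s / D s.
  by move=> hs; rewrite /= mulNr lerN2; exact: (proj2 (andP (h s hs))).
have [c e] := @sharp_lin R (fun s => - N s) D (- n0) (- n1) d0 d1 pb (- U) hN' hD pb0 Dp h2.
rewrite /= !mulNr !lerN2 in c e.
by rewrite le_min ge_max a b c e.
Qed.

Lemma Df_pos (R : realType) (a11 a10 a01 a00 al be s : R) :
  0 < a11 -> 0 < a10 -> 0 < a01 -> 0 < al -> 0 < be -> 0 <= s <= 1 ->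
  0 < Df a11 a10 a01 a00 al be s.
Proof.
move=> ? ? ? ? ? hs; rewrite /Df; apply: mulr_gt0 => //.
have := @conv_pos R (a10 * be) (a11 * al) s.
rewrite (_ : a10 * be * (1 - s) + a11 * al * s = a10 * (1 - s) * be + a11 * s * al); last by ring.
by apply; rewrite ?mulr_gt0.
Qed.

Theorem theorem2 (d : measure_display) (X : measurableType d) (R : realType)
  (mu : {measure set X -> \bar R}) (h0 : R)
  (fXY : bool -> X -> R) (Pi : bool -> bool -> X -> R) (pbar : R)
  (P : population X R) :
  0 < h0 < 1 ->
  pbar <= 1 ->
  (forall y x, 0 <= fXY y x) ->
  (forall y, measurable_fun setT (fXY y)) ->
  (forall y, (\int[mu]_x (fXY y x)%:E)%E = 1%E) ->
  (forall t y x, 0 <= Pi t y x) ->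
  (forall y x, Pi true y x + Pi false y x = 1) ->
  (forall t y x, supp (fX P) x -> Pi t y x != 0) ->
  admissible mu fXY Pi pbar P ->
  forall x, supp (fX P) x ->
    (Num.min (Gamma h0 fXY Pi x 0) (Gamma h0 fXY Pi x pbar) <= theta P x
       <= Num.max (Gamma h0 fXY Pi x 0) (Gamma h0 fXY Pi x pbar))
    /\
    (forall L U : R,
       (forall P' : population X R, admissible mu fXY Pi pbar P' ->
          L <= theta P' x <= U) ->
       L <= Num.min (Gamma h0 fXY Pi x 0) (Gamma h0 fXY Pi x pbar) /\
       Num.max (Gamma h0 fXY Pi x 0) (Gamma h0 fXY Pi x pbar) <= U).
Proof.
move=> h0b pb1 f0 mf If Pi0 Pis Pinz adm x Sx.
case: (adm) => vP [csP [ovP [ucP [d1P /andP[p0a p0b]]]]].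
have sup1 z : 0 < fX P z -> 0 < fXY true z.
  by move=> h; move: (h : supp (fX P) z); rewrite csP.1.
have sup0 z : 0 < fX P z -> 0 < fXY false z.
  by move=> h; move: (h : supp (fX P) z); rewrite csP.2.
have sup1' z : 0 < fXY true z -> 0 < fX P z.
  by move=> h; move: (h : supp (fXY true) z); rewrite -csP.1.
have sup0' z : 0 < fXY false z -> 0 < fX P z.
  by move=> h; move: (h : supp (fXY false) z); rewrite -csP.2.
have hPpos z t y : 0 < fX P z -> 0 < Pi t y z.
  by move=> h; rewrite lt0r Pinz ?Pi0.
have hS z : 0 < fX P z -> 0 < fXY true z /\ 0 < fXY false z /\ (forall t y, 0 < Pi t y z).
  by move=> h; split; [exact: sup1 | split; [exact: sup0 | move=> t y; exact: hPpos]].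
have hnS z : ~~ (0 < fX P z) -> fXY true z = 0 /\ fXY false z = 0.
  move=> nS; split; apply/eqP; rewrite eq_le f0 andbT leNgt; apply/negP.
    by move=> /sup1' h; move: nS; rewrite h.
  by move=> /sup0' h; move: nS; rewrite h.
have mS : measurable_fun setT (fun z => 0 < fX P z).
  by apply: measurable_realfun.measurable_fun_ltr; [exact: measurable_cst | exact: vP.1].
have mPi t y : exists g : X -> R, measurable_fun setT g /\
    forall z, 0 < fX P z -> Pi t y z = g z.
  exists (prT_XY P t y); split; last by move=> z hz; exact: (d1P t z y hz).2.
  rewrite /prT_XY /prTY /prY; apply: mbleM; first exact: pr_x_mble vP.
  by apply: mbleV; exact: pr_x_mble vP.
have [al [be hP]] := hS x Sx.
move: (hP true true) (hP true false) (hP false true) (hP false false) => ? ? ? ?.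
have hsum : forall z, \sum_(y1 : bool) \sum_(y0 : bool) \sum_(t : bool) q P z y1 y0 t = 1.
  by case: vP => _ [_ [_ [_ [_ h]]]].
have [Nz1 Nz2 th] := theta_P (fXY := fXY) (Pi := Pi) hsum ((ovP true x Sx).2)
  (fun t => ucP t x Sx) (fun t y => d1P t x y Sx) Sx al be (fun t y => Pinz t y x Sx).
have pP0 : 0 < p0 mu P by rewrite lt0r Nz1.
have pP1 : p0 mu P < 1 by rewrite lt_neqAle (le_trans p0b pb1) andbT; apply: contra Nz2 => /eqP ->; rewrite subrr.
have pb0 : 0 < pbar by apply: lt_le_trans p0b.
set N := Nf (Pi true true x) (Pi true false x) (Pi false true x) (Pi false false x) (fXY true x) (fXY false x).
set D := Df (Pi true true x) (Pi true false x) (Pi false true x) (Pi false false x) (fXY true x) (fXY false x).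
have hN s : N s = Pi true true x * Pi false false x * fXY false x +
    (Pi true true x * (Pi false true x * fXY true x - Pi false false x * fXY false x)) * s.
  by rewrite /N /Nf; ring.
have hD s : D s = Pi false true x * Pi true false x * fXY false x +
    (Pi false true x * (Pi true true x * fXY true x - Pi true false x * fXY false x)) * s.
  by rewrite /D /Df; ring.
have Dp s : 0 <= s <= 1 -> 0 < D s by move=> hs; apply: Df_pos.
have G0 : Gamma h0 fXY Pi x 0 = N 0 / D 0.
  by apply: GammaND => //; rewrite lexx ler01.
have Gb : Gamma h0 fXY Pi x pbar = N pbar / D pbar.
  by apply: GammaND => //; rewrite ltW.
rewrite G0 Gb; split.
  rewrite th; apply: (mob hN hD).
  - by rewrite ltW.
  - by apply: Dp; rewrite lexx ler01.
  - by apply: Dp; rewrite !ltW.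
  - by apply: Dp; rewrite ltW.
move=> L U HLU.
have Dp' s : 0 <= s <= pbar -> 0 < D s.
  by case/andP => u v; apply: Dp; apply/andP; split; lra.
have HS s : 0 < s < pbar -> L <= N s / D s <= U.
  move=> /andP[s0 s1].
  have sp : 0 < s < 1 by apply/andP; split; lra.
  have [A T] := adm_popc (S := fun z => 0 < fX P z) sp (ltW s1) f0 mf If Pis mS mPi hS hnS.
  by rewrite -(T x Sx); exact: HLU.
have [a b] := sharp_lin2 hN hD pb0 Dp' HS.
by split.
Qed.
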